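(* Let $n,m$ be positive integers and $\mathbf a=(a_1,\dots,a_n),\mathbf b=(b_1,\dots,b_n)\in\mathbb N^n$. Let $b_{n+1}=\sum_{i=1}^n(a_i-b_i)$, $\mathbf a'=(a_1-b_1,a_2,\dots,a_n,0)$ and $\mathbf b'=(0,b_2,\dots,b_n,b_{n+1})$. Then $\mathcal F_{G(n,m)}(\mathbf a,\mathbf b)$ is integrally equivalent to $\mathcal F_{H(n,m)}(\mathbf a',\mathbf b')$.
   Context: $G(n,m)$ has vertex set $\{(i,j):1\le i\le n,0\le j\le m\}\cup\{s\}$ and edges $((i,j),(i,j+1))$ ($1\le i\le n$, $0\le j\le m-1$), $((i,j),(i+1,j))$ ($1\le i\le n-1$, $0\le j\le m$), $((n,j),s)$ ($0\le j\le m$); $\mathcal F_{G(n,m)}(\mathbf a,\mathbf b)$ is the set of nonnegative real edge weightings with outflow minus inflow $a_i$ at $(i,0)$, $-b_i$ at $(i,m)$, $-\sum a_i+\sum b_i$ at $s$, $0$ elsewhere. $H(n,m)$ is the directed grid graph with vertex set $\{(i,j):1\le i\le n+1,0\le j\le m\}$ and edges $((i,j),(i,j+1))$ ($1\le i\le n+1$, $0\le j\le m-1$) and $((i,j),(i+1,j))$ ($1\le i\le n$, $0\le j\le m$). For $\mathbf a'=(a'_1,\dots,a'_{n+1})$, $\mathbf b'=(b'_1,\dots,b'_{n+1})$ with equal sums, $\mathcal F_{H(n,m)}(\mathbf a',\mathbf b')$ is the set of nonnegative real edge weightings with outflow minus inflow $a'_i$ at $(i,0)$, $-b'_i$ at $(i,m)$,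 and $0$ elsewhere. Integral equivalence: an affine map restricting to a bijection between the polytopes that preserves the lattice. *)

(* Defs.v *)
From HB Require Import structures.
From mathcomp Require Import all_boot all_order all_algebra.
From mathcomp Require Import all_classical all_reals.
Set Implicit Arguments. Unset Strict Implicit. Unset Printing Implicit Defensive.
Import Order.TTheory GRing.Theory Num.Theory.
Local Open Scope ring_scope.

Section Generic.
Variable R : realType.

Definition affine_map (E1 E2 : finType) (A : E2 -> E1 -> R) (c : E2 -> R)
  (x : {ffun E1 -> R}) : {ffun E2 -> R} :=
  [ffun e2 => c e2 + \sum_(e1 : E1) A e2 e1 * x e1].

Definition bij_between (T1 T2 : Type) (P : T1 -> Prop) (Q : T2 -> Prop)
  (f : T1 -> T2) : Prop :=
  [/\ (forall x, P x -> Q (f x)),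
      (forall x y, P x -> P y -> f x = f y -> x = y) &
      (forall y, Q y -> exists x, P x /\ f x = y)].

Definition aff_hull (E : finType) (P : {ffun E -> R} -> Prop)
  (x : {ffun E -> R}) : Prop :=
  exists (k : nat) (p : 'I_k -> {ffun E -> R}) (l : 'I_k -> R),
    [/\ (forall i, P (p i)), \sum_(i < k) l i = 1 &
        x = [ffun e => \sum_(i < k) l i * p i e]].

Definition lattice_pt (E : finType) (x : {ffun E -> R}) : Prop :=
  exists z : E -> int, forall e, x e = (z e)%:~R.

Definition integrally_equivalent (E1 E2 : finType)
  (P : {ffun E1 -> R} -> Prop) (Q : {ffun E2 -> R} -> Prop) : Prop :=
  exists (A : E2 -> E1 -> R) (c : E2 -> R),
    bij_between P Q (affine_map A c) /\
    bij_between (fun x => aff_hull P x /\ lattice_pt x)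
                (fun y => aff_hull Q y /\ lattice_pt y) (affine_map A c).

Definition flow_polytope (V E : finType) (src tgt : E -> V) (d : V -> R)
  (x : {ffun E -> R}) : Prop :=
  (forall e, 0 <= x e) /\
  forall v, \sum_(e | src e == v) x e - \sum_(e | tgt e == v) x e = d v.
End Generic.

(* vertex Some (i,j) stands for (i+1, j) (1 <= i+1 <= n, 0 <= j <= m);
   None stands for the sink s *)
Definition VG (n m : nat) : finType := option ('I_n * 'I_m.+1).

Definition adjG (n m : nat) (u v : VG n m) : bool :=
  match u, v with
  | Some (i, j), Some (i', j') =>
      ((i == i' :> nat) && (j.+1 == j' :> nat)) ||
      ((i.+1 == i' :> nat) && (j == j' :> nat))
  | Some (i, j), None => i.+1 == n
  | _, _ => false
  end.

Definition EG (n m : nat) : finType := {p : VG n m * VG n m | adjG p.1 p.2}.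
Definition srcG n m (e : EG n m) : VG n m := (val e).1.
Definition tgtG n m (e : EG n m) : VG n m := (val e).2.

Definition demandG (R : realType) (n m : nat) (a b : 'I_n -> nat)
  (v : VG n m) : R :=
  match v with
  | Some (i, j) => if (j == 0%N :> nat) then (a i)%:R
                   else if (j == m :> nat) then - (b i)%:R else 0
  | None => - (\sum_(i < n) (a i)%:R) + \sum_(i < n) (b i)%:R
  end.

Definition FG (R : realType) (n m : nat) (a b : 'I_n -> nat) :=
  @flow_polytope R (VG n m) (EG n m) (@srcG n m) (@tgtG n m) (demandG R a b).

(* vertex (i,j) stands for (i+1, j) (1 <= i+1 <= n+1, 0 <= j <= m) *)
Definition VH (n m : nat) : finType := ('I_n.+1 * 'I_m.+1)%type.

Definition adjH (n m : nat) (u v : VH n m) : bool :=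
  ((u.1 == v.1 :> nat) && (u.2.+1 == v.2 :> nat)) ||
  ((u.1.+1 == v.1 :> nat) && (u.2 == v.2 :> nat)).

Definition EH (n m : nat) : finType := {p : VH n m * VH n m | adjH p.1 p.2}.
Definition srcH n m (e : EH n m) : VH n m := (val e).1.
Definition tgtH n m (e : EH n m) : VH n m := (val e).2.

Definition demandH (R : realType) (n m : nat) (a' b' : 'I_n.+1 -> int)
  (v : VH n m) : R :=
  if (v.2 == 0%N :> nat) then (a' v.1)%:~R
  else if (v.2 == m :> nat) then - (b' v.1)%:~R else 0.

Definition FH (R : realType) (n m : nat) (a' b' : 'I_n.+1 -> int) :=
  @flow_polytope R (VH n m) (EH n m) (@srcH n m) (@tgtH n m) (demandH R a' b').

(* entry number k (0-based) of a vector 'I_n -> nat, 0 out of range *)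
Definition entry (n : nat) (f : 'I_n -> nat) (k : nat) : nat :=
  if insub k is Some i then f i else 0%N.

(* a' = (a_1 - b_1, a_2, ..., a_n, 0)   (0-based index k) *)
Definition a_prime (n : nat) (a b : 'I_n -> nat) (k : 'I_n.+1) : int :=
  if (k == 0%N :> nat) then (entry a 0)%:Z - (entry b 0)%:Z
  else if (k < n)%N then (entry a k)%:Z else 0.

(* b' = (0, b_2, ..., b_n, b_{n+1}),  b_{n+1} = sum_i (a_i - b_i) *)
Definition b_prime (n : nat) (a b : 'I_n -> nat) (k : 'I_n.+1) : int :=
  if (k == 0%N :> nat) then 0
  else if (k < n)%N then (entry b k)%:Z
  else \sum_(i < n) ((a i)%:Z - (b i)%:Z).

(* Main.v *)
Require Import Defs.
From mathcomp Require Import all_boot all_order all_algebra.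
From mathcomp Require Import all_classical all_reals.
From mathcomp Require Import zify ring lra.
Set Implicit Arguments. Unset Strict Implicit. Unset Printing Implicit Defensive.
Import Order.TTheory GRing.Theory Num.Theory.
Local Open Scope ring_scope.
Ltac ordb := repeat match goal with i : _ |- _ =>
  let t := type of (ltn_ord i) in lazymatch goal with _ : t |- _ => fail | _ => have := ltn_ord i; intro end end.

Section CodeSum.
Variables (R : realType) (E K : finType) (code : E -> K) (ok : pred K).
Hypothesis code_inj : injective code.
Hypothesis code_ok : forall e, ok (code e).
Hypothesis code_surj : forall k, ok k -> exists e, code e = k.

Definition XS (x : E -> R) (k : K) := \sum_(e | code e == k) x e.

Lemma XS_code x e : XS x (code e) = x e.
Proof.
rewrite /XS (big_pred1 e) // => e' /=.
by rewrite (inj_eq code_inj).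
Qed.

Lemma XS_nok x k : ~~ ok k -> XS x k = 0.
Proof.
move=> hk; rewrite /XS big_pred0 // => e; apply/eqP => he.
by move: hk; rewrite -he code_ok.
Qed.

Lemma XS_fun (F : K -> R) k : XS (fun e => F (code e)) k = if ok k then F k else 0.
Proof.
case: ifP => hk; last by rewrite XS_nok ?hk.
by case: (code_surj hk) => e <-; rewrite XS_code.
Qed.

Lemma XS_ge0 x k : (forall e, 0 <= x e) -> 0 <= XS x k.
Proof. by move=> h; apply: sumr_ge0 => e _. Qed.

Lemma sum_part (Q : pred K) x : \sum_(e | Q (code e)) x e = \sum_(k | Q k) XS x k.
Proof.
rewrite (partition_big code Q) //; apply: eq_bigr => k Qk.
by apply: eq_bigl => e; case: (code e =P k) => [->|]; rewrite ?Qk ?andbF.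
Qed.

Lemma sum_lin (F : K -> R) x : \sum_e F (code e) * x e = \sum_k F k * XS x k.
Proof.
rewrite (partition_big code predT) //; apply: eq_bigr => k _.
rewrite /XS mulr_sumr; apply: eq_big => e //=.
by move/eqP => ->.
Qed.
End CodeSum.

Lemma sum_ind (R : realType) (T : finType) (P : pred T) (F : T -> R) :
  \sum_(k : T) (P k)%:R * F k = \sum_(k | P k) F k.
Proof.
rewrite [RHS]big_mkcond; apply: eq_bigr => k _.
by case: (P k); rewrite ?mul1r ?mul0r.
Qed.

Section Eval.
Variables (R : realType) (n m : nat).
Local Notation N := n.+1.
Local Notation M := m.+1.
Definition Kt := ('I_N.+1 * 'I_M.+1 * bool)%type.
Definition Qpt (i j : nat) (K : Kt) := (K.1.1 == i :> nat) && (K.1.2 == j :> nat).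
Definition Qin (i j : nat) (K : Kt) :=
  ((K.1.1 == i :> nat) && (K.1.2.+1 == j)%N && K.2) ||
  ((K.1.1.+1 == i)%N && (K.1.2 == j :> nat) && ~~ K.2).
Definition sinkP (K : Kt) := ~~ K.2 && (K.1.1.+1 == N)%N.
Definition sinkS (F : Kt -> R) (j : nat) := \sum_(K : Kt | sinkP K && (K.1.2 <= j)%N) F K.
Definition Fn (F : Kt -> R) (i j : nat) (d : bool) := F (inord i, inord j, d).
Definition net (F : Kt -> R) (i j : nat) :=
  Fn F i j true + Fn F i j false -
  ((if (0 < j)%N then Fn F i j.-1 true else 0) + (if (0 < i)%N then Fn F i.-1 j false else 0)).

Lemma pt_sum (F : Kt -> R) i j d : (i <= N)%N -> (j <= M)%N ->
  \sum_(K : Kt | (K.1.1 == i :> nat) && (K.1.2 == j :> nat) && (K.2 == d)) F K = Fn F i j d.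
Proof.
move=> hi hj; rewrite /Fn (big_pred1 (inord i, inord j, d)) // => [[[k1 k2] d']] /=.
rewrite !xpair_eqE -!val_eqE /= !inordK //.
Qed.

Lemma sum_Qpt (F : Kt -> R) i j : (i <= N)%N -> (j <= M)%N ->
  \sum_(K : Kt | Qpt i j K) F K = Fn F i j true + Fn F i j false.
Proof.
move=> hi hj; rewrite (bigID (fun K : Kt => K.2)) /=.
congr (_ + _); rewrite -pt_sum //; apply: eq_bigl => [[[k1 k2] d']];
  rewrite /Qpt /=; case: d' => /=; rewrite ?andbT ?andbF //.
Qed.

Lemma sum_Qin (F : Kt -> R) i j : (i <= N)%N -> (j <= M)%N ->
  \sum_(K : Kt | Qin i j K) F K =
  (if (0 < j)%N then Fn F i j.-1 true else 0) + (if (0 < i)%N then Fn F i.-1 j false else 0).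
Proof.
move=> hi hj; rewrite (bigID (fun K : Kt => K.2)) /=.
congr (_ + _).
  case: ifP => hj0.
    rewrite -pt_sum; [|lia|lia].
    apply: eq_bigl => [[[k1 k2] d']]; rewrite /Qin /=; case: d' => /=; rewrite ?andbT ?andbF ?orbF //.
    lia.
  rewrite big_pred0 // => [[[k1 k2] d']]; rewrite /Qin /=; case: d' => /=; rewrite ?andbT ?andbF ?orbF //.
  lia.
case: ifP => hi0.
  rewrite -pt_sum; [|lia|lia].
  apply: eq_bigl => [[[k1 k2] d']]; rewrite /Qin /=; case: d' => /=; rewrite ?andbT ?andbF ?orbF //.
  lia.
rewrite big_pred0 // => [[[k1 k2] d']]; rewrite /Qin /=; case: d' => /=; rewrite ?andbT ?andbF ?orbF //.
lia.
Qed.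

Lemma sinkS0 (F : Kt -> R) : sinkS F 0 = Fn F n 0 false.
Proof.
rewrite /sinkS -pt_sum //; apply: eq_bigl => [[[k1 k2] d']]; rewrite /sinkP /=.
case: d' => /=; rewrite ?andbT ?andbF //; lia.
Qed.

Lemma sinkSS (F : Kt -> R) j : (j < M)%N ->
  sinkS F j.+1 = sinkS F j + Fn F n j.+1 false.
Proof.
move=> hj; rewrite /sinkS (bigID (fun K : Kt => (K.1.2 <= j)%N)) /=.
congr (_ + _).
  by apply: eq_bigl => K; case: (sinkP K) => //=; lia.
rewrite -(@pt_sum F n j.+1 false) //; apply: eq_bigl => [[[k1 k2] d']]; rewrite /sinkP /=.
case: d' => /=; rewrite ?andbT ?andbF //; lia.
Qed.

Lemma sinkS_all (F : Kt -> R) : \sum_(K : Kt | sinkP K) F K = sinkS F M.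
Proof. by apply: eq_bigl => K; rewrite -ltnS ltn_ord andbT. Qed.

Lemma Kinord (K : Kt) : K = (inord K.1.1, inord K.1.2, K.2).
Proof. by case: K => [[k1 k2] d] /=; rewrite !inord_val. Qed.
End Eval.

Section Code.

Variables (n m : nat).
Local Notation N := n.+1.
Local Notation M := m.+1.
Local Notation Kt := (Kt n m).

Definition codeG (p : VG N M * VG N M) : Kt :=
  match p with
  | (Some (i, j), Some (i', _)) => (widen_ord (leqnSn N) i, j, (i == i' :> nat))
  | (Some (i, j), None) => (widen_ord (leqnSn N) i, j, false)
  | (None, _) => (ord0, ord0, false)
  end.
Definition codeH (p : VH N M * VH N M) : Kt := (p.1.1, p.1.2, p.1.1 == p.2.1 :> nat).

Definition okG (K : Kt) : bool := (K.1.1 < N)%N && (K.2 ==> (K.1.2 < M)%N).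
Definition okH (K : Kt) : bool := (K.2 ==> (K.1.2 < M)%N) && (~~ K.2 ==> (K.1.1 < N)%N).

Definition decG (K : Kt) : VG N M * VG N M :=
  (Some (inord K.1.1, K.1.2),
   if K.2 then Some (inord K.1.1, inord K.1.2.+1)
   else if (K.1.1.+1 < N)%N then Some (inord K.1.1.+1, K.1.2) else None).
Definition decH (K : Kt) : VH N M * VH N M :=
  ((K.1.1, K.1.2), if K.2 then (K.1.1, inord K.1.2.+1) else (inord K.1.1.+1, K.1.2)).

Lemma decG_code (e : EG N M) : decG (codeG (val e)) = val e.
Proof.
case: e => [[[[i j]|] [[i' j']|]]] //= adj; rewrite /decG /=.
- case: eqP => Hii /=; rewrite inord_val.
    move: adj => /orP[/andP[/eqP h1 /eqP h2]|/andP[/eqP h1 /eqP h2]]; last by (ordb; lia).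
    congr (_, Some (_, _)); apply: val_inj => /=; rewrite ?inordK; ordb; (ordb; lia).
  move: adj => /orP[/andP[/eqP h1 /eqP h2]|/andP[/eqP h1 /eqP h2]]; first by (ordb; lia).
  have -> : (i.+1 < N)%N by (ordb; lia).
  congr (_, Some (_, _)); apply: val_inj => /=; rewrite ?inordK; (ordb; lia).
- rewrite inord_val; move: adj => /eqP h.
  by have -> : (i.+1 < N)%N = false by (ordb; lia).
Qed.

Lemma codeG_inj (e e' : EG N M) : codeG (val e) = codeG (val e') -> e = e'.
Proof. by move=> h; apply: val_inj; rewrite -decG_code h decG_code. Qed.

Lemma codeG_ok (e : EG N M) : okG (codeG (val e)).
Proof.
case: e => [[[[i j]|] [[i' j']|]]] //= adj; rewrite /okG /=.
- case: eqP => Hii /=; move: adj => /orP[/andP[/eqP h1 /eqP h2]|/andP[/eqP h1 /eqP h2]]; (ordb; lia).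
- (ordb; lia).
Qed.

Lemma codeG_surj (K : Kt) : okG K -> exists e : EG N M, codeG (val e) = K.
Proof.
case: K => [[i j] d]; rewrite /okG /= => /andP[hi hd].
have adj : adjG (decG (i, j, d)).1 (decG (i, j, d)).2.
  rewrite /decG /=; case: d hd => /= hd.
    by rewrite !inordK; (ordb; lia).
  case: ifP => h /=; rewrite ?inordK; (ordb; lia).
exists (exist _ (decG (i, j, d)) adj) => /=.
rewrite /decG /=; case: d hd {adj} => /= hd.
  congr (_, _, _); first by apply: val_inj => /=; rewrite inordK.
  rewrite !inordK; (ordb; lia).
case: ifP => h /=.
  congr (_, _, _); first by apply: val_inj => /=; rewrite inordK.
  rewrite !inordK; (ordb; lia).
by congr (_, _, _); apply: val_inj => /=; rewrite inordK.
Qed.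

Lemma decH_code (e : EH N M) : decH (codeH (val e)) = val e.
Proof.
case: e => [[[i j] [i' j']]] /= adj; rewrite /decH /=.
rewrite /adjH /= in adj.
case: eqP => Hii /=.
  move: adj => /orP[/andP[/eqP h1 /eqP h2]|/andP[/eqP h1 /eqP h2]]; last by (ordb; lia).
  congr (_, (_, _)); apply: val_inj => /=; rewrite ?inordK; (ordb; lia).
move: adj => /orP[/andP[/eqP h1 /eqP h2]|/andP[/eqP h1 /eqP h2]]; first by (ordb; lia).
congr (_, (_, _)); apply: val_inj => /=; rewrite ?inordK; (ordb; lia).
Qed.

Lemma codeH_inj (e e' : EH N M) : codeH (val e) = codeH (val e') -> e = e'.
Proof. by move=> h; apply: val_inj; rewrite -decH_code h decH_code. Qed.

Lemma codeH_ok (e : EH N M) : okH (codeH (val e)).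
Proof.
case: e => [[[i j] [i' j']]] /= adj; rewrite /okH /=; rewrite /adjH /= in adj.
case: eqP => Hii /=; move: adj => /orP[/andP[/eqP h1 /eqP h2]|/andP[/eqP h1 /eqP h2]]; (ordb; lia).
Qed.

Lemma codeH_surj (K : Kt) : okH K -> exists e : EH N M, codeH (val e) = K.
Proof.
case: K => [[i j] d]; rewrite /okH /= => /andP[hd hd'].
have adj : adjH (decH (i, j, d)).1 (decH (i, j, d)).2.
  rewrite /decH /adjH /=; case: d hd hd' => /= hd hd'; rewrite !inordK; (ordb; lia).
exists (exist _ (decH (i, j, d)) adj) => /=.
rewrite /decH /codeH /=; case: d hd hd' {adj} => /= hd hd'.
  by rewrite eqxx.
rewrite inordK; last (ordb; lia).
by have -> : (i == i.+1 :> nat) = false by lia.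
Qed.

Ltac adjcase adj := move: adj => /orP[/andP[/eqP ? /eqP ?]|/andP[/eqP ? /eqP ?]].

Lemma srcG_code (e : EG N M) (v : 'I_N * 'I_M.+1) :
  (srcG e == Some v) = Qpt v.1 v.2 (codeG (val e)).
Proof.
case: v => v1 v2; case: e => [[[[i j]|] [[i' j']|]]] //= adj;
  rewrite /srcG /Qpt /= !xpair_eqE //=.
Qed.

Lemma tgtG_code (e : EG N M) (v : 'I_N * 'I_M.+1) :
  (tgtG e == Some v) = Qin v.1 v.2 (codeG (val e)).
Proof.
case: v => v1 v2; case: e => [[[[i j]|] [[i' j']|]]] //= adj;
  rewrite /tgtG /Qin /= ?(inj_eq (@Some_inj _)) ?xpair_eqE -?val_eqE //=.
  case: eqP => /= hii; adjcase adj; ordb; lia.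
move/eqP: adj => adj. have -> : (None == Some (v1, v2)) = false by []. ordb; lia.
Qed.

Lemma tgtG_None (e : EG N M) : (tgtG e == None) = sinkP (codeG (val e)).
Proof.
case: e => [[[[i j]|] [[i' j']|]]] //= adj; rewrite /tgtG /sinkP /=.
  have -> : (Some (i', j') == None) = false by []. case: eqP => /= hii; adjcase adj; ordb; lia.
Qed.

Lemma srcH_code (e : EH N M) (v : VH N M) :
  (srcH e == v) = Qpt v.1 v.2 (codeH (val e)).
Proof. by case: v => v1 v2; case: e => [[[i j] [i' j']]] /= adj; rewrite /srcH /Qpt /= xpair_eqE. Qed.

Lemma tgtH_code (e : EH N M) (v : VH N M) :
  (tgtH e == v) = Qin v.1 v.2 (codeH (val e)).
Proof.
case: v => v1 v2; case: e => [[[i j] [i' j']]] /= adj; rewrite /tgtH /Qin /= xpair_eqE -?val_eqE /=.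
rewrite /adjH /= in adj.
case: eqP => /= hii; adjcase adj; ordb; lia.
Qed.
End Code.

Section Flow.
Variables (R : realType) (n m : nat) (a b : 'I_n.+1 -> nat).
Local Notation N := n.+1.
Local Notation M := m.+1.
Local Notation Kt := (Kt n m).
Definition cG (e : EG N M) : Kt := codeG (val e).
Definition cH (e : EH N M) : Kt := codeH (val e).
Definition XG (x : {ffun EG N M -> R}) : Kt -> R := XS cG x.
Definition YH (y : {ffun EH N M -> R}) : Kt -> R := XS cH y.

Lemma cG_inj : injective cG. Proof. by move=> e e'; apply: codeG_inj. Qed.
Lemma cH_inj : injective cH. Proof. by move=> e e'; apply: codeH_inj. Qed.

Lemma outG_Some (x : {ffun EG N M -> R}) (i : 'I_N) (j : 'I_M.+1) :
  \sum_(e | srcG e == Some (i, j)) x e - \sum_(e | tgtG e == Some (i, j)) x e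
  = net (XG x) i j.
Proof.
rewrite (eq_bigl (fun e => Qpt i j (cG e))); last by move=> e; rewrite srcG_code.
rewrite (eq_bigl (fun e => Qin i j (cG e)) (P1 := fun e => tgtG e == Some (i, j))); last by move=> e; rewrite tgtG_code.
rewrite (sum_part cG (Qpt i j)) (sum_part cG (Qin i j)).
rewrite sum_Qpt ?sum_Qin //; try (ordb; lia).
Qed.

Lemma outG_None (x : {ffun EG N M -> R}) :
  \sum_(e | srcG e == None) x e - \sum_(e | tgtG e == None) x e
  = - sinkS (XG x) M.
Proof.
rewrite big_pred0; last by case=> [[[[i j]|] w]].
rewrite (eq_bigl (fun e => sinkP (cG e))); last by move=> e; rewrite tgtG_None.
by rewrite (sum_part cG (@sinkP n m)) sinkS_all sub0r.
Qed.

Lemma outH (y : {ffun EH N M -> R}) (v : VH N M) :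
  \sum_(e | srcH e == v) y e - \sum_(e | tgtH e == v) y e = net (YH y) v.1 v.2.
Proof.
rewrite (eq_bigl (fun e => Qpt v.1 v.2 (cH e))); last by move=> e; rewrite srcH_code.
rewrite (eq_bigl (fun e => Qin v.1 v.2 (cH e)) (P1 := fun e => tgtH e == v)); last by move=> e; rewrite tgtH_code.
rewrite (sum_part cH (Qpt v.1 v.2)) (sum_part cH (Qin v.1 v.2)).
rewrite sum_Qpt ?sum_Qin //; try (ordb; lia). all: case: v => v1 v2 /=; ordb; lia.
Qed.

Lemma cG_ok e : okG (cG e). Proof. exact: codeG_ok. Qed.
Lemma cH_ok e : okH (cH e). Proof. exact: codeH_ok. Qed.
Lemma cG_surj K : okG K -> exists e, cG e = K. Proof. exact: codeG_surj. Qed.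
Lemma cH_surj K : okH K -> exists e, cH e = K. Proof. exact: codeH_surj. Qed.

Lemma XG_code x e : XG x (cG e) = x e. Proof. exact: (XS_code cG_inj). Qed.
Lemma YH_code y e : YH y (cH e) = y e. Proof. exact: (XS_code cH_inj). Qed.
Lemma XG_fun (F : Kt -> R) K : XS cG (fun e => F (cG e)) K = if okG K then F K else 0.
Proof. exact: (XS_fun cG_inj cG_ok cG_surj). Qed.
Lemma YH_fun (F : Kt -> R) K : XS cH (fun e => F (cH e)) K = if okH K then F K else 0.
Proof. exact: (XS_fun cH_inj cH_ok cH_surj). Qed.
Lemma XG_nok x K : ~~ okG K -> XG x K = 0.
Proof. exact: (XS_nok cG_ok). Qed.
Lemma YH_nok y K : ~~ okH K -> YH y K = 0.
Proof. exact: (XS_nok cH_ok). Qed.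

Definition b0 := entry b 0.
Definition cF (K : Kt) : R := if (K.1.1 == 0 :> nat) && K.2 then - (b0%:R) else 0.
Definition AF (K2 K1 : Kt) : R :=
  if (K2.1.1 < N)%N then (K1 == K2)%:R
  else (K2.2 && sinkP K1 && (K1.1.2 <= K2.1.2)%N)%:R.
Definition Amat (e2 : EH N M) (e1 : EG N M) : R := AF (cH e2) (cG e1).
Definition cvec (e2 : EH N M) : R := cF (cH e2).
Definition FX (x : {ffun EG N M -> R}) (K : Kt) : R :=
  cF K + (if (K.1.1 < N)%N then XG x K else if K.2 then sinkS (XG x) K.1.2 else 0).
Definition fmap := affine_map Amat cvec.
Definition GX (y : {ffun EH N M -> R}) (K : Kt) : R := YH y K - cF K.
Definition gmap (y : {ffun EH N M -> R}) : {ffun EG N M -> R} :=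
  [ffun e1 => GX y (cG e1)].

Lemma fE x e2 : fmap x e2 = FX x (cH e2).
Proof.
rewrite /fmap /affine_map ffunE /FX /cvec; congr (_ + _).
rewrite /Amat (sum_lin cG (AF (cH e2)) x) /AF.
case: ifP => _.
  by rewrite sum_ind big_pred1_eq.
rewrite sum_ind; case: (cH e2).2 => /=.
  by [].
by rewrite big_pred0.
Qed.

Lemma YH_f x K : YH (fmap x) K = if okH K then FX x K else 0.
Proof.
rewrite -YH_fun /YH /XS; apply: eq_bigr => e _; exact: fE.
Qed.

Lemma XG_g y K : XG (gmap y) K = if okG K then GX y K else 0.
Proof.
rewrite -XG_fun /XG /XS; apply: eq_bigr => e _; by rewrite ffunE.
Qed.

Lemma gf x : gmap (fmap x) = x.
Proof.
apply/ffunP => e; rewrite ffunE /GX YH_f.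
have := cG_ok e; rewrite /okG => /andP[h1 h2].
have -> : okH (cG e) by rewrite /okH h2 h1 implybT.
by rewrite /FX h1 XG_code addrC addKr.
Qed.

Lemma entry_inord (f : 'I_N -> nat) i : (i < N)%N -> entry f i = f (inord i).
Proof.
move=> hi; rewrite /entry insubT /=; congr f; apply: val_inj => /=; rewrite inordK //.
Qed.

Definition dG (i j : nat) : R :=
  if j == 0%N then (entry a i)%:R else if j == M then - (entry b i)%:R else 0.
Definition dH (i j : nat) : R :=
  if j == 0%N then (a_prime a b (inord i))%:~R
  else if j == M then - (b_prime a b (inord i))%:~R else 0.
Definition cFt (i j : nat) : R := if (i == 0%N) && (j < M)%N then - (b0%:R) else 0.

Lemma consG x : @FG R N M a b x -> forall i j, (i < N)%N -> (j <= M)%N ->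
  net (XG x) i j = dG i j.
Proof.
move=> [_ hx] i j hi hj; have := hx (Some (inord i, inord j)).
rewrite outG_Some /demandG /dG !inordK //; try lia.
by rewrite !entry_inord.
Qed.

Lemma consGs x : @FG R N M a b x ->
  - sinkS (XG x) M = - (\sum_(i < N) (a i)%:R) + \sum_(i < N) (b i)%:R.
Proof. by move=> [_ hx]; have := hx None; rewrite outG_None. Qed.

Lemma introG (x : {ffun EG N M -> R}) : (forall e, 0 <= x e) ->
  (forall i j, (i < N)%N -> (j <= M)%N -> net (XG x) i j = dG i j) ->
  - sinkS (XG x) M = - (\sum_(i < N) (a i)%:R) + \sum_(i < N) (b i)%:R ->
  @FG R N M a b x.
Proof.
move=> h0 h1 h2; split => // [[[i j]|]]; last by rewrite outG_None h2.
rewrite outG_Some h1 //; last by ordb; lia.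
by rewrite /dG /demandG /entry !valK.
Qed.

Lemma consH y : @FH R N M (a_prime a b) (b_prime a b) y -> forall i j, (i <= N)%N -> (j <= M)%N ->
  net (YH y) i j = dH i j.
Proof.
move=> [_ hy] i j hi hj; have := hy (inord i, inord j).
rewrite outH /demandH /dH /= !inordK //; lia.
Qed.

Lemma introH (y : {ffun EH N M -> R}) : (forall e, 0 <= y e) ->
  (forall i j, (i <= N)%N -> (j <= M)%N -> net (YH y) i j = dH i j) ->
  @FH R N M (a_prime a b) (b_prime a b) y.
Proof.
move=> h0 h1; split => // [[i j]]; rewrite outH h1 /=; try (ordb; lia).
by rewrite /dH /demandH /= inord_val.
Qed.

Lemma okG_inord i j d : (i <= N)%N -> (j <= M)%N ->
  okG ((inord i, inord j, d) : Kt) = (i < N)%N && (d ==> (j < M)%N).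
Proof. by move=> hi hj; rewrite /okG /= !inordK. Qed.
Lemma okH_inord i j d : (i <= N)%N -> (j <= M)%N ->
  okH ((inord i, inord j, d) : Kt) = (d ==> (j < M)%N) && (~~ d ==> (i < N)%N).
Proof. by move=> hi hj; rewrite /okH /= !inordK. Qed.
Lemma cF_inord i j d : (i <= N)%N -> (j <= M)%N ->
  cF ((inord i, inord j, d) : Kt) = if (i == 0%N) && d then - (b0%:R) else 0.
Proof. by move=> hi hj; rewrite /cF /= !inordK. Qed.

Lemma shift_net (X Y : Kt -> R) i j :
  Fn Y i j true = Fn X i j true + cFt i j ->
  Fn Y i j false = Fn X i j false ->
  ((0 < j)%N -> Fn Y i j.-1 true = Fn X i j.-1 true + cFt i j.-1) ->
  ((0 < i)%N -> Fn Y i.-1 j false = Fn X i.-1 j false) ->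
  net Y i j = net X i j + cFt i j - (if (0 < j)%N then cFt i j.-1 else 0).
Proof.
move=> h1 h2 h3 h4; rewrite /net h1 h2.
case: (ltnP 0 j) => hj; [rewrite h3 // | ]; (case: (ltnP 0 i) => hi; [rewrite h4 // | ]);
  rewrite ?addr0; lra.
Qed.

Lemma dHG i j : (i < N)%N -> (j <= M)%N ->
  dH i j = dG i j + cFt i j - (if (0 < j)%N then cFt i j.-1 else 0).
Proof.
move=> hi hj; rewrite /dH /dG /cFt /a_prime /b_prime !inordK; try lia.
rewrite hi.
case: (i =P 0%N) => [->|hi0] /=.
  rewrite /b0.
  case: (j =P 0%N) => [->|hj0] /=.
    by rewrite intrD intrN /=; lra.
  have -> : (0 < j)%N by lia.
  have -> : (j.-1 < M)%N by lia.
  case: (j =P M) => [->|hjM] /=.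
    by rewrite ltnn /=; lra.
  have -> : (j < M)%N by lia.
  by lra.
case: (j =P 0%N) => [->|hj0] /=; first by lra.
by case: (j == M); case: (0 < j)%N; rewrite /= ?addr0 ?subr0.
Qed.

Lemma FYX x i j : (i < N)%N -> (j <= M)%N ->
  Fn (YH (fmap x)) i j true = Fn (XG x) i j true + cFt i j /\
  Fn (YH (fmap x)) i j false = Fn (XG x) i j false.
Proof.
move=> hi hj; rewrite /Fn !YH_f !okH_inord; try lia.
rewrite /FX !cF_inord /= ?inordK; try lia.
rewrite hi /cFt; split.
  case: (ltnP j M) => hjM /=.
    by rewrite andbT addrC.
  rewrite XG_nok ?okG_inord /=; try lia.
  rewrite andbF; lra.
by rewrite andbF add0r.
Qed.

Lemma GXY y i j : (i < N)%N -> (j <= M)%N ->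
  Fn (YH y) i j true = Fn (XG (gmap y)) i j true + cFt i j /\
  Fn (YH y) i j false = Fn (XG (gmap y)) i j false.
Proof.
move=> hi hj; rewrite /Fn !XG_g !okG_inord; try lia.
rewrite /GX !cF_inord /= ?inordK; try lia.
rewrite hi /cFt; split.
  case: (ltnP j M) => hjM /=.
    by rewrite andbT subrK.
  rewrite YH_nok ?okH_inord /=; try lia.
  rewrite andbF; lra.
by rewrite andbF subr0.
Qed.

Lemma XG_ge0 x : @FG R N M a b x -> forall K, 0 <= XG x K.
Proof. by move=> [h _] K; apply: XS_ge0. Qed.
Lemma YH_ge0 y : @FH R N M (a_prime a b) (b_prime a b) y -> forall K, 0 <= YH y K.
Proof. by move=> [h _] K; apply: XS_ge0. Qed.

Lemma row0 x : @FG R N M a b x -> forall j, (j < M)%N -> b0%:R <= Fn (XG x) 0 j true.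
Proof.
move=> hx.
have key : forall t, (t <= m)%N -> b0%:R <= Fn (XG x) 0 (m - t) true.
  elim=> [|t IH] ht.
    have := consG hx (i := 0) (j := M) erefl (leqnn _).
    rewrite /net /dG /= subn0.
    have -> : Fn (XG x) 0 M true = 0.
      by rewrite /Fn XG_nok // okG_inord //= ltnn.
    have := XG_ge0 hx (inord 0, inord M, false).
    rewrite /Fn /b0 eqxx => h1 h2; lra.
  have := consG hx (i := 0) (j := m - t) erefl _.
  rewrite /net /dG /=.
  have -> : (m - t == 0)%N = false by lia.
  have -> : (m - t == M)%N = false by lia.
  have -> : (0 < m - t)%N by lia.
  have -> : (m - t).-1 = (m - t.+1)%N by lia.
  have := IH (ltnW ht).
  have := XG_ge0 hx (inord 0, inord (m - t), false).
  rewrite /Fn => h1 h2 h3.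
  have h4 := h3 (leq_trans (leq_subr _ _) (leqnSn _)).
  lra.
move=> j hj; have := key (m - j)%N (leq_subr _ _).
by rewrite (_ : (m - (m - j) = j)%N) //; lia.
Qed.

Lemma rowN y : @FH R N M (a_prime a b) (b_prime a b) y ->
  (forall j, (j < M)%N -> Fn (YH y) N j true = sinkS (YH y) j) /\
  sinkS (YH y) M = (b_prime a b (inord N))%:~R.
Proof.
move=> hy.
have hF : forall j, (j <= M)%N -> Fn (YH y) N j false = 0.
  by move=> j hj; rewrite /Fn YH_nok // okH_inord //= ltnn.
have key : forall j, (j < M)%N -> Fn (YH y) N j true = sinkS (YH y) j.
  elim=> [|j IH] hj.
    have := consH hy (i := N) (j := 0) (leqnn _) (leq0n _).
    rewrite /net /dH hF // sinkS0 /= /a_prime inordK //= ltnn.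
    move=> h; lra.
  have := consH hy (i := N) (j := j.+1) (leqnn _) (ltnW hj).
  rewrite /net /dH hF /=; last by lia.
  rewrite sinkSS; last by lia.
  rewrite -IH; last by lia.
  have -> : (j.+1 == M)%N = false by lia.
  move=> h; lra.
split => //.
have := consH hy (i := N) (j := M) (leqnn _) (leqnn _).
rewrite /net /dH hF //=.
have -> : Fn (YH y) N M true = 0 by rewrite /Fn YH_nok // okH_inord //= ltnn.
rewrite key // sinkSS //.
by rewrite eqxx => h; lra.
Qed.

Lemma sumab : (\sum_(i < N) ((a i)%:Z - (b i)%:Z))%:~R = \sum_(i < N) (a i)%:R - \sum_(i < N) (b i)%:R :> R.
Proof.
rewrite rmorph_sum /= -sumrB; apply: eq_bigr => i _.
by rewrite intrD intrN.
Qed.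

Lemma rowNf x : @FG R N M a b x -> forall j, (j <= M)%N ->
  net (YH (fmap x)) N j = dH N j.
Proof.
move=> hx j hj.
have hT : forall j, (j <= M)%N -> Fn (YH (fmap x)) N j true = if (j < M)%N then sinkS (XG x) j else 0.
  move=> k hk; rewrite /Fn YH_f okH_inord //= ?andbT; case: ifP => // hkM.
  by rewrite /FX cF_inord //= !inordK // ltnn /= add0r.
have hF : Fn (YH (fmap x)) N j false = 0.
  by rewrite /Fn YH_f okH_inord //= ltnn.
have hF' : Fn (YH (fmap x)) n j false = Fn (XG x) n j false.
  by case: (FYX x (i := n) (j := j) (ltnSn _) hj).
rewrite /net hT // hF /= hF' /dH /a_prime /b_prime inordK //= ltnn.
case: (j =P 0%N) => [->|hj0] /=.
  rewrite sinkS0; lra.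
have -> : (0 < j)%N by lia.
rewrite hT; last by lia.
have -> : (j.-1 < M)%N by lia.
case: (j =P M) => [->|hjM] /=.
  rewrite ltnn /= -(sinkSS _ (ltnSn m)).
  have := consGs hx.
  rewrite sumab => h; lra.
have -> : (j < M)%N by lia.
have -> : j = j.-1.+1 by lia.
rewrite sinkSS /=; last by lia.
lra.
Qed.

Lemma b0_ge0 : 0 <= b0%:R :> R. Proof. exact: ler0n. Qed.

Lemma fP x : @FG R N M a b x -> @FH R N M (a_prime a b) (b_prime a b) (fmap x).
Proof.
move=> hx; apply: introH.
  move=> e; rewrite fE; have hok := cH_ok e; move: hok.
  case: (cH e) => [[k1 k2] d] hok; rewrite /FX /cF /=.
  case: (ltnP k1 N) => hk.
    case h0: ((k1 == 0 :> nat) && d).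
      move/andP: h0 => [/eqP h1 h2].
      have hj : (k2 < M)%N by move: hok; rewrite /okH /= h2 /= => /andP[].
      have := row0 hx hj; rewrite /Fn.
      have -> : ((inord 0, inord k2, true) : Kt) = (k1, k2, d).
        by rewrite [RHS]Kinord /= h1 h2.
      move=> h; lra.
    by rewrite add0r; apply: XG_ge0.
  have -> : (k1 == 0 :> nat) = false by lia.
  rewrite /= add0r; case: d {hok} => //.
  by apply: sumr_ge0 => K _; apply: XG_ge0.
move=> i j hi hj; case: (ltnP i N) => hiN.
  have [h1 h2] := FYX x hiN hj.
  rewrite (shift_net h1 h2).
  - by rewrite consG // -dHG.
  - by move=> hj0; case: (FYX x hiN (j := j.-1) ltac:(lia)).
  - by move=> hi0; case: (FYX x (i := i.-1) ltac:(lia) hj).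
have -> : i = N by lia.
exact: rowNf.
Qed.

Lemma sinkS_g y j : sinkS (XG (gmap y)) j = sinkS (YH y) j.
Proof.
apply: eq_bigr => K /andP[hK _]; rewrite XG_g.
move: hK; case: K => [[k1 k2] d]; rewrite /sinkP /okG /GX /cF /= => /andP[hd /eqP hk1].
by rewrite (negbTE hd) /= andbF subr0 hk1 ltnSn.
Qed.

Lemma gP y : @FH R N M (a_prime a b) (b_prime a b) y -> @FG R N M a b (gmap y).
Proof.
move=> hy; apply: introG.
- move=> e; rewrite ffunE /GX /cF; have := YH_ge0 hy (cG e); have := b0_ge0.
  case: ifP => _ h1 h2; lra.
- move=> i j hi hj.
  have [h1 h2] := GXY y hi hj.
  have := shift_net h1 h2.
  rewrite consH ?dHG //; try lia.
  move=> h; have {h} := h (fun hj0 => proj1 (GXY y hi (j := j.-1) ltac:(lia)))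
                          (fun hi0 => proj2 (GXY y (i := i.-1) ltac:(lia) hj)).
  move=> h; lra.
- rewrite sinkS_g (proj2 (rowN hy)) /b_prime inordK //= ltnn sumab; lra.
Qed.

Lemma fg y : @FH R N M (a_prime a b) (b_prime a b) y -> fmap (gmap y) = y.
Proof.
move=> hy; apply/ffunP => e; rewrite fE -YH_code.
have := cH_ok e; case: (cH e) => [[k1 k2] d] hok; rewrite /FX /=.
case: (ltnP k1 N) => hk.
  rewrite XG_g.
  have -> : okG (k1, k2, d) by move: hok; rewrite /okG /okH /= hk => /andP[-> _].
  by rewrite /GX addrC subrK.
move: hok; rewrite /okH /=.
case: d => /= hok'; last by lia.
have hk2 : (k2 < M)%N by move: hok'; rewrite andbT.
rewrite /cF /=.
have -> : (k1 == 0 :> nat) = false by lia.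
rewrite add0r sinkS_g -(proj1 (rowN hy)) // /Fn.
rewrite inord_val; congr (YH y (_, _, _)).
apply: val_inj; rewrite /= inordK //; ordb; lia.
Qed.
End Flow.

Section Affine.
Variables (R : realType) (E1 E2 : finType) (A : E2 -> E1 -> R) (c : E2 -> R).

Lemma affine_comb k (p : 'I_k -> {ffun E1 -> R}) (l : 'I_k -> R) :
  \sum_(i < k) l i = 1 ->
  affine_map A c [ffun e => \sum_(i < k) l i * p i e] =
  [ffun e2 => \sum_(i < k) l i * affine_map A c (p i) e2].
Proof.
move=> hl; apply/ffunP => e2; rewrite !ffunE.
under [RHS]eq_bigr => i _ do rewrite ffunE mulrDr.
rewrite big_split /= -mulr_suml hl mul1r; congr (_ + _).
under eq_bigr => e1 _ do rewrite ffunE mulr_sumr.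
rewrite exchange_big /=; apply: eq_bigr => i _.
rewrite mulr_sumr; apply: eq_bigr => e1 _; lra.
Qed.
End Affine.

Lemma lattice_int (R : realType) (E : finType) (x : {ffun E -> R}) :
  lattice_pt x <-> forall e, x e \is a Num.int.
Proof.
split.
  by move=> [z hz] e; rewrite hz; apply/intrP; exists (z e).
move=> h; exists (fun e => Num.floor (x e)) => e.
by have := h e; rewrite intrEfloor => /eqP ->.
Qed.

Lemma fmap_lat (R : realType) n m (b : 'I_n.+1 -> nat) (x : {ffun EG n.+1 m.+1 -> R}) :
  lattice_pt x -> lattice_pt (fmap b x).
Proof.
move=> /lattice_int hx; apply/lattice_int => e2.
rewrite /fmap /affine_map ffunE rpredD //.
  by rewrite /cvec /cF; case: ifP => _; rewrite ?rpredN ?rpred_nat ?rpred0.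
rewrite rpred_sum // => e1 _; rewrite rpredM //.
by rewrite /Amat /AF; case: ifP => _; rewrite rpred_nat.
Qed.

Lemma gmap_lat (R : realType) n m (b : 'I_n.+1 -> nat) (y : {ffun EH n.+1 m.+1 -> R}) :
  lattice_pt y -> lattice_pt (gmap b y).
Proof.
move=> /lattice_int hy; apply/lattice_int => e1.
rewrite ffunE /GX rpredB //.
  by rewrite /YH /XS rpred_sum.
by rewrite /cF; case: ifP => _; rewrite ?rpredN ?rpred_nat ?rpred0.
Qed.

Theorem proposition7p6 (R : realType) (n m : nat) (hn : (0 < n)%N) (hm : (0 < m)%N)
  (a b : 'I_n -> nat) :
  integrally_equivalent (@FG R n m a b) (@FH R n m (a_prime a b) (b_prime a b)).
Proof.
case: n hn a b => [//|n] _ a b; case: m hm => [//|m] _.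
exists (@Amat R n m), (@cvec R n m b).
have finj : forall x y : {ffun EG n.+1 m.+1 -> R}, fmap b x = fmap b y -> x = y.
  by move=> x y h; rewrite -(gf b x) -(gf b y) h.
split.
  split.
  - by move=> x; apply: fP.
  - by move=> x y _ _; apply: finj.
  - by move=> y hy; exists (gmap b y); split; [exact: (gP hy) | exact: (fg hy)].
split.
- move=> x [[k [p [l [hp hl ->]]]] hlat]; split; last by apply: fmap_lat.
  exists k, (fun i => fmap b (p i)), l; split => //.
  + by move=> i; apply: fP.
  + exact: affine_comb.
- by move=> x y _ _; apply: finj.
- move=> y [[k [q [l [hq hl hy]]]] hlat].
  pose x := [ffun e => \sum_(i < k) l i * gmap b (q i) e].
  have hfx : fmap b x = y.
    rewrite /fmap affine_comb // hy; apply/ffunP => e; rewrite !ffunE.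
    by apply: eq_bigr => i _; rewrite -/(fmap b _) (fg (hq i)).
  exists x; split => //; split.
    exists k, (fun i => gmap b (q i)), l; split => //.
    by move=> i; exact: (gP (hq i)).
  by rewrite -(gf b x) hfx; apply: gmap_lat.
Qed.
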